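(* Let $M$ be a matroid on a finite set $E$, and let $P$ and $Q$ be two partitions of $\cup\mathcal{B}(M)$ such that for every $B\in\mathcal{B}(M)$, every $K\in P$ and every $L\in Q$, we have $|B\cap K|=1$ and $|B\cap L|=1$. Then $P=Q$.
   Context: $\mathcal{B}(M)$ denotes the family of bases of $M$ and $\cup\mathcal{B}(M)$ the union of all bases. A partition of a set $U$ is a family of nonempty pairwise disjoint subsets of $U$ whose union is $U$. *)

(* Defs.v *)
From mathcomp Require Import all_boot.
Set Implicit Arguments. Unset Strict Implicit. Unset Printing Implicit Defensive.

Definition matroid_bases (T : finType) (E : {set T}) (bases : {set {set T}}) : Prop :=
  [/\ forall B, B \in bases -> B \subset E,
      bases != set0 &
      forall B1 B2 x, B1 \in bases -> B2 \in bases -> x \in B1 :\: B2 ->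
        exists2 y, y \in B2 :\: B1 & (B1 :\ x) :|: [set y] \in bases].

Record matroid (T : finType) := Matroid {
  ground : {set T};
  bases : {set {set T}};
  matroid_basesP : matroid_bases ground bases }.

Definition union_bases (T : finType) (M : matroid T) : {set T} :=
  \bigcup_(B in bases M) B.

(* Main.v *)
Require Import Defs.
From mathcomp Require Import all_boot.
Set Implicit Arguments. Unset Strict Implicit. Unset Printing Implicit Defensive.

Lemma card1_eq (T : finType) (A : {set T}) a b :
  #|A| = 1 -> a \in A -> b \in A -> a = b.
Proof. by move/eqP/cards1P=> [c ->]; rewrite !inE => /eqP-> /eqP->. Qed.

Lemma cover_sub (T : finType) (P : {set {set T}}) D K x :
  partition P D -> K \in P -> x \in K -> x \in D.
Proof.
move=> /and3P[/eqP<- _ _] KP xK; apply/bigcupP; by exists K.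
Qed.

Lemma char_block (T : finType) (M : matroid T) (P : {set {set T}}) K x z :
  partition P (union_bases M) ->
  (forall B K, B \in bases M -> K \in P -> #|B :&: K| = 1) ->
  K \in P -> x \in K -> z \in union_bases M ->
  (z \in K) = (z == x) || ~~ [exists B in bases M, (x \in B) && (z \in B)].
Proof.
move=> hP h1 KP xK zU.
have xU := cover_sub hP KP xK.
have [/eqP->|zx] /= := boolP (z == x); first by rewrite xK.
apply/idP/idP.
  move=> zK; apply/negP=> /existsP[B /andP[BM /andP[xB zB]]].
  have := card1_eq (h1 B K BM KP) (a:=x) (b:=z).
  rewrite !inE xB xK zB zK => /(_ isT isT) /esym/eqP; by rewrite (negbTE zx).
move=> nex; apply/negPn/negP=> zK.
case/bigcupP: zU=> B BM zB.
case/bigcupP: xU=> Bx BxM xBx.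
have: #|B :&: K| != 0 by rewrite h1.
rewrite cards_eq0 => /set0Pn[w]; rewrite inE=> /andP[wB wK].
have wx : w != x.
  apply/negP=> /eqP wx; move: nex => /negP; apply.
  by apply/existsP; exists B; rewrite BM -wx wB zB.
have wBx : w \notin Bx.
  apply/negP=> wBx; have := card1_eq (h1 Bx K BxM KP) (a:=w) (b:=x).
  by rewrite !inE wBx wK xBx xK => /(_ isT isT)/eqP; rewrite (negbTE wx).
case: (matroid_basesP M)=> _ _ ex.
have wD : w \in B :\: Bx by rewrite inE wBx wB.
have [y] := ex B Bx w BM BxM wD.
rewrite inE => /andP[yB yBx] B'M.
have: #|((B :\ w) :|: [set y]) :&: K| != 0 by rewrite h1.
rewrite cards_eq0 => /set0Pn[v]; rewrite !inE => /andP[/orP[/andP[vw vB]|/eqP vy] vK].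
  have := card1_eq (h1 B K BM KP) (a:=v) (b:=w).
  by rewrite !inE vB vK wB wK => /(_ isT isT)/eqP; rewrite (negbTE vw).
have yx : y = x.
  apply: (card1_eq (h1 Bx K BxM KP)); rewrite inE ?yBx -?vy ?vK //.
  by rewrite xBx xK.
move: nex => /negP; apply; apply/existsP; exists ((B :\ w) :|: [set y]).
rewrite B'M !inE -yx eqxx orbT /= zB andbT.
by apply/orP; left; apply/negP=> /eqP zw; move: zK; rewrite zw wK.
Qed.

Theorem proposition17 (T : finType) (M : matroid T) (P Q : {set {set T}}) :
  partition P (union_bases M) ->
  partition Q (union_bases M) ->
  (forall B K L, B \in bases M -> K \in P -> L \in Q ->
     #|B :&: K| = 1 /\ #|B :&: L| = 1) ->
  P = Q.
Proof.
move=> hP hQ h.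
have blk : forall (R : {set {set T}}) z, partition R (union_bases M) ->
    z \in union_bases M -> exists2 K, K \in R & z \in K.
  move=> R z /and3P[/eqP hc _ _]; rewrite -hc => /bigcupP[K KR zK]; by exists K.
have [/eqP U0|/set0Pn[u uU]] := boolP (union_bases M == set0).
  have e0 : forall R : {set {set T}}, partition R (union_bases M) -> R = set0.
    move=> R hR; apply/eqP; rewrite -subset0; apply/subsetP=> K KR.
    have [/eqP K0|/set0Pn[k kK]] := boolP (K == set0).
      by case/and3P: hR => _ _; rewrite -K0 KR.
    by move: (cover_sub hR KR kK); rewrite U0 inE.
  by rewrite (e0 P hP) (e0 Q hQ).
have [K0 K0P _] := blk P u hP uU.
have [L0 L0Q _] := blk Q u hQ uU.
have h1P : forall B K, B \in bases M -> K \in P -> #|B :&: K| = 1.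
  by move=> B K BM KP; case: (h B K L0 BM KP L0Q).
have h1Q : forall B L, B \in bases M -> L \in Q -> #|B :&: L| = 1.
  by move=> B L BM LQ; case: (h B K0 L BM K0P LQ).
have sub : forall (R S : {set {set T}}),
    partition R (union_bases M) -> partition S (union_bases M) ->
    (forall B K, B \in bases M -> K \in R -> #|B :&: K| = 1) ->
    (forall B K, B \in bases M -> K \in S -> #|B :&: K| = 1) ->
    R \subset S.
  move=> R S hR hS h1R h1S; apply/subsetP=> K KR.
  have [/eqP Ke|/set0Pn[x xK]] := boolP (K == set0).
    by case/and3P: hR => _ _; rewrite -Ke KR.
  have xU := cover_sub hR KR xK.
  have [L LS xL] := blk S x hS xU.
  suff -> : K = L by [].
  apply/setP=> z; have [zU|zU] := boolP (z \in union_bases M).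
    by rewrite (char_block hR h1R KR xK zU) (char_block hS h1S LS xL zU).
  apply/idP/idP=> zin; [move: (cover_sub hR KR zin)|move: (cover_sub hS LS zin)];
    by rewrite (negbTE zU).
by apply/eqP; rewrite eqEsubset !sub.
Qed.
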